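(* For every $m\in\mathbb N$ there exists a ReLU neural network $\varphi_m^{\exp}\in\widetilde\Phi(m^2\log^2m,\ m\log m,\ m^3\log^3m,\ 1)$ with $|\varphi^{\exp}_m(x)-e^{-x}|\le2^{-m}$ for all $x\ge0$.
   Context: ReLU networks are maps $x\mapsto A_L\sigma_{b_L}\cdots A_1\sigma_{b_1}A_0x$ with $\sigma_b(x)=((x_j-b_j)\vee0)_j$. $\widetilde\Phi(\tilde L,\tilde W,\tilde S,\tilde B)$ is the class of such networks with depth $\lesssim\tilde L$, maximal layer width $\lesssim\tilde W$, number of nonzero weights/biases $\lesssim\tilde S$ and all parameters bounded in absolute value by a quantity $\lesssim\tilde B$, with constants independent of $m$. *)

(* Defs.v *)
From HB Require Import structures.
From mathcomp Require Import all_boot all_order all_algebra.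
From mathcomp Require Import reals sequences exp.
Set Implicit Arguments. Unset Strict Implicit. Unset Printing Implicit Defensive.
Import Order.TTheory GRing.Theory Num.Theory.
Local Open Scope ring_scope.

(* A ReLU network  x |-> A_L sigma_{b_L} ... A_1 sigma_{b_1} A_0 x,
   from input dimension n to output dimension k.
   - [Last A]          : the final affine-free layer A_L (L = 0 remaining),
   - [Layer A b N]     : x |-> N (sigma_b (A x)).                        *)
Inductive relu_net (R : Type) : nat -> nat -> Type :=
| Last  : forall n k, 'M[R]_(k, n) -> relu_net R n k
| Layer : forall n n' k, 'M[R]_(n', n) -> 'cV[R]_n' -> relu_net R n' k ->
          relu_net R n k.

Arguments Last {R n k}.
Arguments Layer {R n n' k}.

Definition sigma_shift (R : realType) (n : nat) (b x : 'cV[R]_n) : 'cV[R]_n :=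
  \col_j Num.max (x j ord0 - b j ord0) 0.

Fixpoint net_eval (R : realType) n k (N : relu_net R n k) : 'cV[R]_n -> 'cV[R]_k :=
  match N with
  | Last _ _ A => fun x => A *m x
  | Layer _ _ _ A b N' => fun x => net_eval N' (sigma_shift b (A *m x))
  end.

Definition realize (R : realType) (N : relu_net R 1 1) (x : R) : R :=
  net_eval N (const_mx x) ord0 ord0.

(* depth = number of linear maps A_0, ..., A_L, i.e. L + 1 *)
Fixpoint net_depth (R : Type) n k (N : relu_net R n k) : nat :=
  match N with
  | Last _ _ _ => 1
  | Layer _ _ _ _ _ N' => (net_depth N').+1
  end.

Fixpoint net_width (R : Type) n k (N : relu_net R n k) : nat :=
  match N with
  | Last n k _ => maxn n k
  | Layer n n' _ _ _ N' => maxn n (net_width N')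
  end.

Definition mx_nnz (R : realType) m n (A : 'M[R]_(m, n)) : nat :=
  (\sum_(i < m) \sum_(j < n) nat_of_bool (A i j != 0%R))%N.

Fixpoint net_size (R : realType) n k (N : relu_net R n k) : nat :=
  match N with
  | Last _ _ A => mx_nnz A
  | Layer _ _ _ A b N' => addn (addn (mx_nnz A) (mx_nnz b)) (net_size N')
  end.

Definition mx_bounded (R : realType) m n (B : R) (A : 'M[R]_(m, n)) : Prop :=
  forall i j, `|A i j| <= B.

Fixpoint net_params_bounded (R : realType) n k (B : R) (N : relu_net R n k) : Prop :=
  match N with
  | Last _ _ A => mx_bounded B A
  | Layer _ _ _ A b N' => mx_bounded B A /\ mx_bounded B b /\ net_params_bounded B N'
  end.

(* Membership in Phi~(L, W, S, B) with a given constant C (the "<~" constant). *)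
Definition in_Phi (R : realType) (C : R) (L W S B : R) (N : relu_net R 1 1) : Prop :=
  [/\ (net_depth N)%:R <= C * L,
      (net_width N)%:R <= C * W,
      (net_size N)%:R <= C * S &
      net_params_bounded (C * B) N].

(* Main.v *)
Require Import Defs.
From HB Require Import structures.
From mathcomp Require Import all_boot all_order all_algebra.
From mathcomp Require Import reals sequences exp.
From mathcomp Require Import ring lra zify.
Import Order.TTheory GRing.Theory Num.Theory.
Local Open Scope ring_scope.

Definition relu (R:realType) (x:R) : R := Num.max x 0.
Arguments relu {R}.
Definition tentR (R:realType) (p:R) : R := 2 * p - 4 * relu (p - (1/2)).
Definition st (R : realType) (a p : R) : 'cV[R]_3 :=
  \col_(i < 3) (match val i with 0 => a | 1 => p | _ => relu (p - (1/2)) end).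
Definition bS (R : realType) : 'cV[R]_3 := \col_(i<3) (if val i == 2 then (1/2) else 0).
Definition AS (R : realType) (s:nat) : 'M[R]_3 := \matrix_(i<3, j<3)
  match val i, val j with 0,0 => 1 | 0,1 => -2/4^+(s.+1) | 0,2 => 4/4^+(s.+1)
  | 0,_ => 0 | _,0 => 0 | _,1 => 2 | _,_ => -4 end.
Definition AT (R : realType) : 'M[R]_3 := \matrix_(i<3, j<3) if val j == 0 then 1 else 0.

Arguments tentR {R}.
Arguments st {R}.
Lemma maxP' (R : realType) (x y : R) : (x <= y /\ Num.max x y = y) \/ (y < x /\ Num.max x y = x).
Proof. rewrite maxEle; case: leP => h; [left|right]; split => //. Qed.
Ltac maxcases := repeat match goal with |- context [Num.max ?a ?b] =>
   case: (@maxP' _ a b) => [[+ ->]|[+ ->]] end; intros; try lra.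
Lemma max_relu (R : realType) (x : R) : relu (relu x - 1/2) = relu (x - 1/2).
Proof. rewrite /relu; maxcases. Qed.

Lemma max_congr {R:realType} (x y z : R) : x = y -> Num.max x z = Num.max y z.
Proof. by move->. Qed.

Lemma step_eval (R : realType) s (a p : R) :
  sigma_shift (bS R) (AS R s *m st a p) =
  st (relu (a - tentR p / 4^+(s.+1))) (relu (tentR p)).
Proof.
apply/matrixP => i j; rewrite !mxE !big_ord_recr big_ord0 /= !mxE /=.
idtac.
case: i => [[|[|[|i]]] Hi] //=; rewrite ?max_relu /tentR; move: (relu (p - 1/2)) => q;
  rewrite /relu; f_equal; field; try by []; apply: expf_neq0; apply: lt0r_neq0; lra.
Qed.

Lemma trans_eval (R : realType) (a p : R) :
  sigma_shift (bS R) (AT R *m st a p) = st (relu a) (relu a).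
Proof.
apply/matrixP => i j; rewrite !mxE !big_ord_recr big_ord0 /= !mxE /=.
case: i => [[|[|[|i]]] Hi] //=; rewrite ?max_relu; move: (relu (p - 1/2)) => q;
  rewrite /relu; f_equal; field.
all: by []. Qed.

Definition E0 (R : realType) : 'M[R]_(1,3) := \matrix_(i<1, j<3) if val j == 0 then 1 else 0.
Definition A0 (R : realType) (K : nat) : 'M[R]_(3,1) := \matrix_(i<3, j<1) - (1 / 2^+K).
Definition b0 (R : realType) : 'cV[R]_3 := \col_(i<3) (if val i == 2 then - (1/2) else -1).

Fixpoint sq_from (R : realType) (s j : nat) (N : relu_net R 3 1) : relu_net R 3 1 :=
  match j with 0 => N | j'.+1 => Layer (AS R s) (bS R) (sq_from R s.+1 j' N) end.
Fixpoint body (R : realType) (k K : nat) : relu_net R 3 1 :=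
  match K with 0 => Last (E0 R) | K'.+1 => sq_from R 0%N k (Layer (AT R) (bS R) (body R k K')) end.
Arguments sq_from {R}. Arguments body {R}.
Definition thenet (R : realType) (k K : nat) : relu_net R 1 1 := Layer (A0 R K) (b0 R) (body k K).

Fixpoint sq_state (R : realType) (s j : nat) (a p : R) : R * R :=
  match j with 0 => (a, p)
  | j'.+1 => sq_state R s.+1 j' (relu (a - tentR p / 4^+(s.+1))) (relu (tentR p)) end.
Definition sqr (R : realType) (k : nat) (y : R) : R := (sq_state R 0%N k y y).1.
Arguments sqr {R}. Arguments sq_state {R}.
Definition Fs (R : realType) (k : nat) (y : R) : R := relu (sqr k y).
Arguments Fs {R}.

Lemma sq_from_eval (R : realType) s j (N : relu_net R 3 1) (a p : R) :
  net_eval (sq_from s j N) (st a p) =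
  net_eval N (st (sq_state s j a p).1 (sq_state s j a p).2).
Proof.
elim: j s a p => [|j IH] s a p //=.
by rewrite step_eval IH.
Qed.

Lemma body_eval (R : realType) k K (y : R) :
  net_eval (body k K) (st y y) ord0 ord0 = iter K (Fs k) y.
Proof.
elim: K y => [|K IH] y /=.
  by rewrite !mxE !big_ord_recr big_ord0 /= !mxE /=; ring.
by rewrite sq_from_eval /= trans_eval IH -iterSr.
Qed.

Lemma relu_congr (R : realType) (x y : R) : x = y -> Num.max x 0 = relu y.
Proof. by move->. Qed.

Lemma first_eval (R : realType) K (x : R) :
  sigma_shift (b0 R) (A0 R K *m const_mx x) = st (relu (1 - x / 2^+K)) (relu (1 - x / 2^+K)).
Proof.
apply/matrixP => i j; rewrite !mxE !big_ord_recr big_ord0 /= !mxE /=.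
case: i => [[|[|[|i]]] Hi] //=; rewrite ?max_relu; apply: relu_congr; field; apply: expf_neq0; apply: lt0r_neq0; lra.
Qed.

Lemma realize_eval (R : realType) k K (x : R) :
  realize (thenet R k K) x = iter K (Fs k) (relu (1 - x / 2^+K)).
Proof. by rewrite /realize /= first_eval body_eval. Qed.


Definition hh (R : realType) (p : R) : R := p - p ^+ 2.
Arguments hh {R}.

Lemma tent_props (R : realType) (p : R) : 0 <= p <= 1 ->
  [/\ 0 <= tentR p, tentR p <= 1 & hh p = tentR p / 4 + hh (tentR p) / 4].
Proof.
move=> /andP[p0 p1]; rewrite /tentR /hh /relu.
case: (@maxP' _ (p - 1/2) 0) => [[h ->]|[h ->]]; split; try lra; ring.
Qed.

Lemma hh_bound (R : realType) (p : R) : 0 <= p <= 1 -> 0 <= hh p <= 1/4.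
Proof. move=> /andP[p0 p1]; rewrite /hh; apply/andP; split.
- have : 0 <= p * (1 - p) by apply: mulr_ge0; lra. rewrite expr2; lra.
- have : 0 <= (p - 1/2) ^+ 2 by apply: sqr_ge0. rewrite !expr2; lra. Qed.

Lemma sq_inv (R : realType) (y : R) j : forall s (a p : R),
  0 <= y <= 1 -> 0 <= p <= 1 -> a = y ^+ 2 + hh p / 4 ^+ s -> a <= y ->
  let q := sq_state s j a p in
  [/\ q.1 = y ^+ 2 + hh q.2 / 4 ^+ (s + j), 0 <= q.2 <= 1 & q.1 <= y].
Proof.
elim: j => [|j IH] s a p hy hp ha hay /=.
  by rewrite addn0; split.
have [t0 t1 ht] := @tent_props _ p hp.
have h4 : 0 < 4 ^+ s :> R by apply: exprn_gt0; lra.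
have E : a - tentR p / 4 ^+ s.+1 = y ^+ 2 + hh (tentR p) / 4 ^+ s.+1.
  rewrite ha ht (exprS (4:R) s). field; apply: lt0r_neq0; lra.
have hT := @hh_bound R (tentR p) (ltac:(apply/andP; split; lra)).
have r1 : relu (a - tentR p / 4 ^+ s.+1) = a - tentR p / 4 ^+ s.+1.
  rewrite /relu max_l // E; apply: addr_ge0; first exact: sqr_ge0.
  apply: divr_ge0; try lra; apply: exprn_ge0; lra.
have r2 : relu (tentR p) = tentR p by rewrite /relu max_l.
rewrite r1 r2 -addSnnS; apply: IH => //; first by apply/andP.
have : 0 <= tentR p / 4 ^+ s.+1 by apply: divr_ge0; try lra; apply: exprn_ge0; lra.
lra.
Qed.

Lemma sqr_bounds (R : realType) k (y : R) : 0 <= y <= 1 ->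
  [/\ y ^+ 2 <= sqr k y, sqr k y <= y ^+ 2 + 1 / 4 ^+ k.+1 & sqr k y <= y].
Proof.
move=> hy.
have hy' := hy; move/andP: hy' => [y0 y1].
have hy0 : y = y ^+ 2 + hh y / 4 ^+ 0 by rewrite /hh expr0 divr1; ring.
have [E hq hle] := @sq_inv R y k 0%N y y hy hy hy0 (lexx y).
rewrite /sqr; set q := sq_state 0 k y y in E hq hle *.
have [b0 b1] := andP (@hh_bound _ _ hq).
have h4 : 0 < 4 ^+ k :> R by apply: exprn_gt0; lra.
rewrite add0n in E; rewrite E; split.
- have := divr_ge0 b0 (ltW h4); lra.
- have hi : 0 <= (4 ^+ k)^-1 :> R by rewrite invr_ge0; exact: ltW.
  have := ler_wpM2r hi b1.
  have -> : 1 / 4 ^+ k.+1 = 1/4 * (4 ^+ k)^-1 :> R.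
    by rewrite exprS; field; apply: lt0r_neq0.
  lra.
- by rewrite -E.
Qed.

Lemma iter_err (R : realType) k K (u : R) : 0 <= u <= 1 ->
  let z := iter K (Fs k) u in
  [/\ u ^+ (2 ^ K) <= z, z <= u ^+ (2 ^ K) + (2 ^+ K - 1) * (1 / 4 ^+ k.+1) & z <= 1].
Proof.
move=> /andP[u0 u1]; elim: K => [|K IH] /=.
  rewrite expn0 expr1 expr0; split; lra.
have [h1 h2 h3] := IH.
set z := iter K (Fs k) u in h1 h2 h3 *.
set e := u ^+ (2 ^ K) in h1 h2 h3 *.
have e0 : 0 <= e by apply: exprn_ge0.
have z0 : 0 <= z by lra.
have [s1 s2 s3] := @sqr_bounds R k z (ltac:(apply/andP; split; lra)).
have d0 : 0 <= 1 / 4 ^+ k.+1 :> R by apply: divr_ge0; [lra | apply: exprn_ge0; lra].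
have Fz : Fs k z = sqr k z.
  rewrite /Fs /relu max_l //; apply: le_trans s1; exact: sqr_ge0.
rewrite Fz expnSr exprM -/e exprS.
set d := 1 / 4 ^+ k.+1 in d0 s2 h2 *.
have m1 : 0 <= (z - e) * (2 - z - e) by apply: mulr_ge0; lra.
have m2 : e ^+ 2 <= z ^+ 2 by rewrite !expr2; apply: ler_pM; lra.
rewrite !expr2 in m2 s1 s2 *.
rewrite expr1 exprS; split; lra.
Qed.


Lemma relu_eq0 (R : realType) (x : R) : x <= 0 -> relu x = 0.
Proof. by move=> h; rewrite /relu max_r. Qed.
Lemma relu_id (R : realType) (x : R) : 0 <= x -> relu x = x.
Proof. by move=> h; rewrite /relu max_l. Qed.

Lemma pow_diff (R : realType) (a b : R) n : 0 <= b -> b <= a ->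
  a ^+ n.+1 - b ^+ n.+1 <= n.+1%:R * a ^+ n * (a - b).
Proof.
move=> b0 ba; elim: n => [|n IH]; first by rewrite expr0 !expr1 mulr1 mul1r.
have a0 : 0 <= a by lra.
have an : 0 <= a ^+ n by exact: exprn_ge0.
have bn : b ^+ n.+1 <= a ^+ n.+1 by apply: lerXn2r.
have E : a ^+ n.+2 - b ^+ n.+2 = a * (a ^+ n.+1 - b ^+ n.+1) + b ^+ n.+1 * (a - b).
  by rewrite !exprS; ring.
rewrite E.
have h1 : a * (a ^+ n.+1 - b ^+ n.+1) <= a * (n.+1%:R * a ^+ n * (a - b)).
  by apply: ler_wpM2l.
have h2 : b ^+ n.+1 * (a - b) <= a ^+ n.+1 * (a - b).
  by apply: ler_wpM2r => //; lra.
have -> : n.+2%:R * a ^+ n.+1 * (a - b) = a * (n.+1%:R * a ^+ n * (a - b)) + a ^+ n.+1 * (a - b).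
  by rewrite exprS -addn1 natrD; ring.
lra.
Qed.

Lemma sq_le_exp (R : realType) (x : R) : 0 <= x -> x ^+ 2 <= 16 * expR (x / 2).
Proof.
move=> x0.
have -> : x / 2 = x / 4 + x / 4 by field.
rewrite expRD.
have h := expR_ge1Dx (x / 4).
have : (1 + x / 4) * (1 + x / 4) <= expR (x / 4) * expR (x / 4).
  apply: ler_pM; lra.
rewrite expr2; nra.
Qed.

Lemma exp_approx (R : realType) (N : nat) (x : R) : (2 <= N)%N -> 0 <= x ->
  `| relu (1 - x / N%:R) ^+ N - expR (- x) | <= 16 / N%:R.
Proof.
move=> N2 x0.
case: N N2 => [//|N'] N2.
have n2 : 2 <= N'.+1%:R :> R by rewrite ler_nat.
have n0 : 0 < N'.+1%:R :> R by lra.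
have [xn|xn] := leP x N'.+1%:R.
- set t := x / N'.+1%:R.
  have t0 : 0 <= t by apply: divr_ge0; lra.
  have t1 : t <= 1 by rewrite /t ler_pdivrMr // mul1r.
  have -> : relu (1 - t) = 1 - t by rewrite /relu max_l //; lra.
  set a := expR (- t).
  have ba : 1 - t <= a by have := expR_ge1Dx (- t); rewrite /a; lra.
  have aN : a ^+ N'.+1 = expR (- x).
    by rewrite /a -expRM_natr /t mulNr divfK //; apply: lt0r_neq0.
  have a1t : a * (1 + t) <= 1.
    have := expR_ge1Dx t; have := expR_gt0 (- t); rewrite -/a => ha ht.
    have := expRxMexpNx_1 t; rewrite -/a => e1.
    have : a * (1 + t) <= a * expR t by apply: ler_wpM2l; lra.
    lra.
  have a0 : 0 <= a by exact: expR_ge0.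
  have ab : a - (1 - t) <= t ^+ 2.
    have : 0 <= t ^+ 3 by exact: exprn_ge0.
    rewrite !exprS expr0; nra.
  have bN : (1 - t) ^+ N'.+1 <= a ^+ N'.+1 by apply: lerXn2r => //; rewrite qualifE /=; lra.
  have pd := @pow_diff R a (1 - t) N' (ltac:(lra)) ba.
  have aN' : a ^+ N' <= expR (- x / 2).
    rewrite /a -expRM_natr ler_expR.
    have xt : x = t * N'.+1%:R by rewrite /t divfK // lt0r_neq0.
    have N1 : 1 <= N'%:R :> R by rewrite ler1n.
    have := mulr_ge0 t0 (ltac:(lra) : 0 <= N'%:R - 1 :> R).
    rewrite xt -addn1 natrD; lra.
  rewrite -aN distrC ger0_norm; last lra.
  set E := expR (- x / 2) in aN'.
  have E0 : 0 <= E by exact: expR_ge0.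
  have Ex : E * x ^+ 2 <= 16.
    have h := @sq_le_exp _ x x0.
    have e1 := expRxMexpNx_1 (x / 2).
    have : E * x ^+ 2 <= E * (16 * expR (x / 2)) by apply: ler_wpM2l.
    rewrite /E mulNr; lra.
  have st2 : 0 <= t ^+ 2 by exact: sqr_ge0.
  have h1 : N'.+1%:R * a ^+ N' * (a - (1 - t)) <= N'.+1%:R * E * t ^+ 2.
    rewrite -!mulrA; apply: ler_wpM2l; first lra.
    apply: ler_pM => //; [exact: exprn_ge0 | lra].
  have key : N'.+1%:R * E * t ^+ 2 = E * x ^+ 2 / N'.+1%:R.
    rewrite /t; field; apply: lt0r_neq0; have := ler0n R N'; lra.
  have h2 : E * x ^+ 2 / N'.+1%:R <= 16 / N'.+1%:R.
    by apply: ler_wpM2r => //; rewrite invr_ge0; exact: ltW.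
  by apply: le_trans pd _; apply: le_trans h1 _; rewrite key.
- have -> : relu (1 - x / N'.+1%:R) = 0.
    apply: relu_eq0.
    have : 1 < x / N'.+1%:R by rewrite ltr_pdivlMr // mul1r.
    by move=> h; rewrite subr_le0; exact: ltW.
  rewrite expr0n /= sub0r normrN ger0_norm; last exact: expR_ge0.
  rewrite ler_pdivlMr //.
  have h := expR_ge1Dx x; have e1 := expRxMexpNx_1 x.
  have E0 := expR_ge0 (- x).
  have : expR (- x) * N'.+1%:R <= expR (- x) * expR x by apply: ler_wpM2l => //; lra.
  lra.
Qed.


Lemma final_err (R : realType) (m : nat) (x : R) : 0 <= x ->
  `|realize (thenet R (m + 4) (m + 5)) x - expR (- x)| <= 2 ^- m.
Proof.
move=> x0.
rewrite realize_eval.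
set K := (m + 5)%N.
have K2 : (2 <= 2 ^ K)%N.
  by rewrite /K addnS expnS; have := expn_gt0 2 (m + 4); lia.
have nE : 2 ^+ K = (2 ^ K)%:R :> R by rewrite natrX.
have ex := @exp_approx R (2 ^ K) x K2 x0.
rewrite -nE in ex.
set u := relu (1 - x / 2 ^+ K) in ex *.
have u01 : 0 <= u <= 1.
  apply/andP; split; first by rewrite /u /relu le_max lexx orbT.
  rewrite /u /relu ge_max ler01 andbT lerBlDr lerDl.
  by apply: divr_ge0 => //; apply: exprn_ge0.
have [h1 h2 h3] := @iter_err R (m + 4) K u u01.
rewrite (_ : (m + 4).+1 = K) in h2; last by rewrite /K; lia.
set z := iter K (Fs (m + 4)) u in h1 h2 h3 *.
have p0 : 0 < 2 ^+ K :> R by apply: exprn_gt0.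
have E4 : 4 ^+ K = 2 ^+ K * 2 ^+ K :> R by rewrite -exprMn; congr (_ ^+ _); ring.
have hb : (2 ^+ K - 1) * (1 / 4 ^+ K) <= 1 / 2 ^+ K :> R.
  rewrite E4.
  have : (2 ^+ K - 1) * (1 / (2 ^+ K * 2 ^+ K)) = 1 / 2 ^+ K - 1 / (2 ^+ K * 2 ^+ K) :> R.
    by field; apply: lt0r_neq0.
  move=> ->.
  have : 0 <= 1 / (2 ^+ K * 2 ^+ K) :> R by apply: divr_ge0 => //; apply: mulr_ge0; exact: ltW.
  lra.
have tri : `|z - expR (- x)| <= `|z - u ^+ (2 ^ K)| + `|u ^+ (2 ^ K) - expR (- x)|.
  by rewrite (_ : z - expR (- x) = (z - u ^+ (2 ^ K)) + (u ^+ (2 ^ K) - expR (- x))); [exact: ler_normD | ring].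
have hz : `|z - u ^+ (2 ^ K)| <= 1 / 2 ^+ K.
  rewrite ger0_norm; lra.
have fin : 1 / 2 ^+ K + 16 / 2 ^+ K <= 2 ^- m :> R.
  rewrite /K exprD.
  have pm : 0 < 2 ^+ m :> R by apply: exprn_gt0.
  have -> : 2 ^+ 5 = 32 :> R by rewrite !exprS expr0; ring.
  rewrite -[X in _ <= X]mul1r.
  have -> : 1 / (2 ^+ m * 32) + 16 / (2 ^+ m * 32) = 17 / 32 * (2 ^+ m)^-1 :> R.
    by field; apply: lt0r_neq0.
  apply: ler_wpM2r; [by rewrite invr_ge0; exact: ltW | lra].
lra.
Qed.


Lemma depth_sq (R : realType) s j (N : relu_net R 3 1) :
  net_depth (sq_from s j N) = (j + net_depth N)%N.
Proof. by elim: j s => [|j IH] s //=; rewrite IH. Qed.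

Lemma depth_body (R : realType) k K : net_depth (body (R:=R) k K) = (K * k.+1 + 1)%N.
Proof.
elim: K => [|K IH] //=; rewrite depth_sq /= IH; lia.
Qed.

Lemma depth_net (R : realType) k K : net_depth (thenet R k K) = (K * k.+1 + 2)%N.
Proof. by rewrite /= depth_body; lia. Qed.

Lemma width_sq (R : realType) s j (N : relu_net R 3 1) :
  net_width N = 3%N -> net_width (sq_from s j N) = 3%N.
Proof. by move=> h; elim: j s => [|j IH] s //=; rewrite IH. Qed.

Lemma width_body (R : realType) k K : net_width (body (R:=R) k K) = 3%N.
Proof. by elim: K => [|K IH] //=; rewrite width_sq //= IH. Qed.

Lemma width_net (R : realType) k K : net_width (thenet R k K) = 3%N.
Proof. by rewrite /= width_body. Qed.

Lemma nnz_le (R : realType) m n (A : 'M[R]_(m, n)) : (mx_nnz A <= m * n)%N.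
Proof.
rewrite /mx_nnz.
have : (\sum_(i < m) \sum_(j < n) nat_of_bool (A i j != 0%R) <= \sum_(i < m) \sum_(j < n) 1)%N.
  by apply: leq_sum => i _; apply: leq_sum => j _; case: (A i j != 0%R).
by rewrite !sum_nat_const !card_ord muln1.
Qed.

Lemma width_ge (R : realType) n k (N : relu_net R n k) : (n <= net_width N)%N /\ (k <= net_width N)%N.
Proof.
elim: N => [n' k' A|n' n'' k' A b N' [IH1 IH2]] /=; split; try lia.
Qed.

Lemma size_le (R : realType) n k (N : relu_net R n k) :
  (net_size N <= (net_width N * net_width N + net_width N) * net_depth N)%N.
Proof.
elim: N => [n' k' A|n' n'' k' A b N' IH] /=.
  have := @nnz_le _ _ _ A; nia.
have := @nnz_le _ _ _ A; have := @nnz_le _ _ _ b; have [h1 h2] := @width_ge _ _ _ N'.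
set w := net_width N' in IH h1 h2 *.
set d := net_depth N' in IH *.
move=> hb hA.
have hw : (w <= maxn n' w)%N by apply: leq_maxr.
set W := maxn n' w in hw *.
have hn : (n' <= W)%N by apply: leq_maxl.
nia.
Qed.

Lemma inv_pow_le (R : realType) (c : R) s : 0 <= c -> 1 <= c -> 0 <= 1 / c ^+ s <= 1.
Proof.
move=> c0 c1; have h : 1 <= c ^+ s by apply: exprn_ege1.
apply/andP; split; first by apply: divr_ge0 => //; lra.
by rewrite ler_pdivrMr ?mul1r //; lra.
Qed.

Lemma bnd_AS (R : realType) (B : R) s : 4 <= B -> mx_bounded B (AS R s).
Proof.
move=> hB i j; rewrite mxE.
have /andP[h0 h1] := @inv_pow_le R 4 s.+1 (ltac:(lra)) (ltac:(lra)).
have e1 : -2 / 4 ^+ s.+1 = - (2 * (1 / 4 ^+ s.+1)) :> R by rewrite mulrA mulr1 mulNr.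
have e2 : 4 / 4 ^+ s.+1 = 4 * (1 / 4 ^+ s.+1) :> R by rewrite mulrA mulr1.
case: i j => [[|[|[|i]]] Hi] [[|[|[|j]]] Hj] //=;
  rewrite ?e1 ?e2 ?normrN ?normr0 ?normr1 ?ger0_norm; lra.
Qed.

Lemma bnd_AT (R : realType) (B : R) : 4 <= B -> mx_bounded B (AT R).
Proof. move=> hB i j; rewrite mxE; case: (val j == 0)%N; rewrite ?normr1 ?normr0; lra. Qed.

Lemma bnd_bS (R : realType) (B : R) : 4 <= B -> mx_bounded B (bS R).
Proof. move=> hB i j; rewrite mxE; case: (val i == 2)%N; rewrite ?normr0 ?ger0_norm; lra. Qed.

Lemma bnd_E0 (R : realType) (B : R) : 4 <= B -> mx_bounded B (E0 R).
Proof. move=> hB i j; rewrite mxE; case: (val j == 0)%N; rewrite ?normr1 ?normr0; lra. Qed.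

Lemma bnd_b0 (R : realType) (B : R) : 4 <= B -> mx_bounded B (b0 R).
Proof. move=> hB i j; rewrite mxE; case: (val i == 2)%N; rewrite normrN ?normr1 ?ger0_norm; lra. Qed.

Lemma bnd_A0 (R : realType) (B : R) K : 4 <= B -> mx_bounded B (A0 R K).
Proof.
move=> hB i j; rewrite mxE normrN.
have /andP[h0 h1] := @inv_pow_le R 2 K (ltac:(lra)) (ltac:(lra)).
rewrite ger0_norm //; lra.
Qed.

Lemma bnd_sq (R : realType) (B : R) s j (N : relu_net R 3 1) : 4 <= B ->
  net_params_bounded B N -> net_params_bounded B (sq_from s j N).
Proof.
move=> hB hN; elim: j s => [|j IH] s //=; split; [exact: bnd_AS | split; [exact: bnd_bS | exact: IH]].
Qed.

Lemma bnd_net (R : realType) (B : R) k K : 4 <= B -> net_params_bounded B (thenet R k K).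
Proof.
move=> hB /=; split; first exact: bnd_A0.
split; first exact: bnd_b0.
elim: K => [|K IH] /=; first exact: bnd_E0.
apply: bnd_sq => //=; split; first exact: bnd_AT.
by split; first exact: bnd_bS.
Qed.


Lemma const_bounds (R : realType) (l L M : R) : 0 < l -> l < 2 -> l <= L -> 2 <= M ->
  let C := 1000 * (l^-1) ^+ 3 in
  [/\ 500 * M ^+ 2 <= C * (M ^+ 2 * L ^+ 2), 500 <= C * (M * L),
      1000 * M ^+ 2 <= C * (M ^+ 3 * L ^+ 3) & 4 <= C * 1].
Proof.
move=> l0 l2 lL M2 C.
set il := l^-1.
have il0 : 0 < il by rewrite invr_gt0.
have lil : l * il = 1 by rewrite /il mulfV // lt0r_neq0.
have ilh : 1/2 <= il.
  have := mulr_gt0 il0 (ltac:(lra) : 0 < 2 - l); lra.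
have C0 : 0 <= C by rewrite /C -/il; apply: mulr_ge0 => //; apply: exprn_ge0; lra.
have L0 : 0 <= L by lra.
have L2 : l ^+ 2 <= L ^+ 2 by apply: lerXn2r => //; rewrite qualifE /=; lra.
have L3 : l ^+ 3 <= L ^+ 3 by apply: lerXn2r => //; rewrite qualifE /=; lra.
have M0 : 0 <= M by lra.
have Cl2 : C * l ^+ 2 = 1000 * il.
  by rewrite /C /il; field; apply: lt0r_neq0.
have Cl1 : C * l = 1000 * (il * il).
  by rewrite /C /il; field; apply: lt0r_neq0.
have Cl3 : C * l ^+ 3 = 1000.
  by rewrite /C /il; field; apply: lt0r_neq0.
have ilil : 1/4 <= il * il by nra.
split.
- have h : C * (M ^+ 2 * l ^+ 2) <= C * (M ^+ 2 * L ^+ 2).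
    apply: ler_wpM2l => //; apply: ler_wpM2l => //; exact: exprn_ge0.
  have e : C * (M ^+ 2 * l ^+ 2) = M ^+ 2 * (C * l ^+ 2) by ring.
  have hM : 0 <= M ^+ 2 by exact: exprn_ge0.
  have : 500 * M ^+ 2 <= M ^+ 2 * (1000 * il).
    rewrite mulrC; apply: ler_wpM2l => //; lra.
  rewrite Cl2 in e; lra.
- have h : C * (M * l) <= C * (M * L) by apply: ler_wpM2l => //; apply: ler_wpM2l.
  have e : C * (M * l) = M * (C * l) by ring.
  have : 2 * (1/4) <= M * (il * il) by apply: ler_pM; lra.
  rewrite Cl1 in e; lra.
- have h : C * (M ^+ 3 * l ^+ 3) <= C * (M ^+ 3 * L ^+ 3).
    apply: ler_wpM2l => //; apply: ler_wpM2l => //; exact: exprn_ge0.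
  have e : C * (M ^+ 3 * l ^+ 3) = M ^+ 3 * (C * l ^+ 3) by ring.
  have : M ^+ 2 * 2 <= M ^+ 3.
    rewrite (exprS M 2) [M * _]mulrC; apply: ler_wpM2l => //; exact: exprn_ge0.
  have hM : 0 <= M ^+ 2 by exact: exprn_ge0.
  rewrite Cl3 in e; lra.
- rewrite mulr1 /C -/il.
  have : (1/2) ^+ 3 <= il ^+ 3 by apply: lerXn2r => //; rewrite qualifE /=; lra.
  rewrite !exprS expr0; lra.
Qed.


Theorem lemmaC3 (R : realType) :
  exists C : R, 0 < C /\
  forall m : nat, (2 <= m)%N ->
  exists N : relu_net R 1 1,
    in_Phi C ((m%:R) ^+ 2 * (ln (m%:R)) ^+ 2)
             (m%:R * ln (m%:R))
             ((m%:R) ^+ 3 * (ln (m%:R)) ^+ 3)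
             1 N /\
    forall x : R, 0 <= x -> `|realize N x - expR (- x)| <= 2 ^- m.
Proof.
have l0 : 0 < ln (2 : R) by apply: ln_gt0; lra.
have l2 : ln (2 : R) < 2 by apply: ln_sublinear; lra.
exists (1000 * ((ln (2 : R))^-1) ^+ 3); split.
  by apply: mulr_gt0; [lra | apply: exprn_gt0; rewrite invr_gt0].
move=> m m2.
have M2 : 2 <= m%:R :> R by rewrite ler_nat.
have lL : ln (2 : R) <= ln m%:R by rewrite ler_ln // posrE; lra.
have [b1 b2 b3 b4] := @const_bounds R _ _ _ l0 l2 lL M2.
exists (thenet R (m + 4) (m + 5)); split; last by move=> x x0; exact: final_err.
have hd : ((m + 5) * (m + 4).+1 + 2 <= 14 * m ^ 2)%N by nia.
have hdR : ((m + 5) * (m + 4).+1 + 2)%:R <= 14 * m%:R ^+ 2 :> R.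
  by rewrite -natrX -natrM ler_nat.
have hM : 0 <= (m%:R : R) ^+ 2 by exact: exprn_ge0.
split.
- rewrite depth_net; lra.
- rewrite width_net; lra.
- have hs := @size_le R _ _ (thenet R (m + 4) (m + 5)).
  rewrite width_net depth_net in hs.
  have hs' : ((net_size (thenet R (m + 4) (m + 5)))%:R : R) <= (12 * (14 * m ^ 2))%:R.
    rewrite ler_nat; apply: leq_trans hs _; nia.
  rewrite natrM natrM natrX in hs'.
  lra.
- by apply: bnd_net.
Qed.
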